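(* Let $\Omega$ be a finite set and $f:2^{\Omega}\to\mathbb{R}$ increasing with $f(\emptyset)=0$, and let $\tilde\gamma\in\Gamma(f)$. Then for every $\mathcal{S}\subseteq\Omega$, $f(\mathcal{S})\ge-|\mathcal{S}|D[f]+\sum_{s\in\mathcal{S}}\tilde\gamma_s$.
   Context: For a permutation $\pi$ of $\Omega$, $\mathcal{S}^\pi_0=\emptyset$, $\mathcal{S}^\pi_k=\{\pi_1,\dots,\pi_k\}$; $\Gamma(f)=\{\gamma\in\mathbb{R}^{|\Omega|}:\exists$ permutation $\pi$ with $\gamma_{\pi_i}=f(\mathcal{S}^\pi_i)-f(\mathcal{S}^\pi_{i-1})$ for all $i\}$. $D[f]=\max\{f(\mathcal{A}\cup\mathcal{B}\cup\{s\})-f(\mathcal{A}\cup\mathcal{B})-f(\mathcal{A}\cup\{s\})+f(\mathcal{A}):\mathcal{A},\mathcal{B}\subseteq\Omega,s\in\Omega,|\mathcal{A}|\le|\Omega|-1\}$. *)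

(* Defs.v *)
From HB Require Import structures.
From mathcomp Require Import all_boot all_order all_algebra.
Set Implicit Arguments. Unset Strict Implicit. Unset Printing Implicit Defensive.
Import Order.TTheory GRing.Theory Num.Theory.
Local Open Scope ring_scope.

(* A permutation pi of Omega is a bijection 'I_#|Omega| -> Omega; pi i is
   the (i+1)-th element pi_{i+1}.  prefix pi k = S^pi_k = {pi_1,...,pi_k}. *)
Definition prefix (Omega : finType) (pi : 'I_#|Omega| -> Omega) (k : nat)
  : {set Omega} := [set pi i | i : 'I_#|Omega| & (i < k)%N].

Definition in_Gamma (R : realDomainType) (Omega : finType)
  (f : {set Omega} -> R) (gamma : Omega -> R) : Prop :=
  exists pi : 'I_#|Omega| -> Omega, bijective pi /\
    forall i : 'I_#|Omega|,
      gamma (pi i) = f (prefix pi i.+1) - f (prefix pi i).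

Definition Dterm (R : realDomainType) (Omega : finType)
  (f : {set Omega} -> R) (A B : {set Omega}) (s : Omega) : R :=
  f (A :|: B :|: [set s]) - f (A :|: B) - f (A :|: [set s]) + f A.

(* D[f] = max of Dterm over A, B, s with |A| <= |Omega| - 1.  The fold is
   started at 0; this is harmless since the term with B = set0 is 0, so 0 is
   attained whenever Omega is nonempty. *)
Definition Dmax (R : realDomainType) (Omega : finType)
  (f : {set Omega} -> R) : R :=
  \big[Num.max/0]_(p : {set Omega} * {set Omega} * Omega
                    | (#|p.1.1| <= #|Omega|.-1)%N) Dterm f p.1.1 p.1.2 p.2.

Definition increasing (R : realDomainType) (Omega : finType)
  (f : {set Omega} -> R) : Prop :=
  forall A B : {set Omega}, A \subset B -> f A <= f B.

(* Main.v *)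
From Pilot Require Import Defs.
From HB Require Import structures.
From mathcomp Require Import all_boot all_order all_algebra.
From mathcomp Require Import lra.
Import Order.TTheory GRing.Theory Num.Theory.
Local Open Scope ring_scope.

Local Notation dprefix := Pilot.Defs.prefix.

Lemma big_max_ge (R : realDomainType) (I : eqType) (r : seq I) (P : pred I)
  (F : I -> R) x : x \in r -> P x -> F x <= \big[Num.max/0]_(i <- r | P i) F i.
Proof.
elim: r => [|y r IH] //; rewrite inE big_cons => /orP [/eqP <-|xr] Px.
  by rewrite Px le_max lexx.
case: (P y); last exact: IH.
by rewrite le_max IH ?orbT.
Qed.

Lemma Dterm_le (R : realDomainType) (Omega : finType) (f : {set Omega} -> R)
  (A B : {set Omega}) (s : Omega) : (#|A| <= #|Omega|.-1)%N -> Dterm f A B s <= Dmax f.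
Proof.
move=> hA; rewrite /Dmax.
apply: (@big_max_ge R _ (index_enum _) _ (fun p => Dterm f p.1.1 p.1.2 p.2) (A, B, s)) => //.
Qed.

Lemma prefixS (Omega : finType) (pi : 'I_#|Omega| -> Omega) (i : 'I_#|Omega|) :
  dprefix pi i.+1 = pi i |: dprefix pi i.
Proof.
apply/setP => x; rewrite in_setU1 /prefix.
apply/imsetP/idP.
  case=> j; rewrite /= inE ltnS leq_eqVlt => /orP [/eqP ej|lt] ->.
    by rewrite (_ : j = i) ?eqxx //; apply: val_inj.
  by apply/orP; right; apply/imsetP; exists j; rewrite ?inE.
case/orP => [/eqP ->|/imsetP [j]]; first by exists i; rewrite ?inE.
by rewrite inE => lt ->; exists j; rewrite // inE ltnS ltnW.
Qed.

Lemma notin_prefix (Omega : finType) (pi : 'I_#|Omega| -> Omega) (i : 'I_#|Omega|) :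
  injective pi -> pi i \notin dprefix pi i.
Proof.
move=> inj; apply/imsetP => [[j]]; rewrite inE => lt /inj e.
by rewrite e ltnn in lt.
Qed.

Lemma prefix0 (Omega : finType) (pi : 'I_#|Omega| -> Omega) : dprefix pi 0 = set0.
Proof. by apply/setP => x; rewrite inE; apply/imsetP => [[j]]; rewrite inE. Qed.

Lemma prefixT (Omega : finType) (pi : 'I_#|Omega| -> Omega) :
  bijective pi -> dprefix pi #|Omega| = setT.
Proof.
case=> g _ gK; apply/setP => x; rewrite inE; apply/imsetP; exists (g x).
  by rewrite inE ltn_ord.
by rewrite gK.
Qed.

Theorem mainTheorem18 (R : realFieldType) (Omega : finType)
  (f : {set Omega} -> R) (gamma : Omega -> R) :
  increasing f -> f set0 = 0 -> in_Gamma f gamma ->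
  forall S : {set Omega},
    f S >= - (#|S|%:R * Dmax f) + \sum_(s in S) gamma s.
Proof.
move=> _ f0 [pi [bij hg]] S.
have inj := bij_inj bij.
suff: forall k, (k <= #|Omega|)%N ->
  f (S :&: dprefix pi k) >= - (#|S :&: dprefix pi k|%:R * Dmax f)
     + \sum_(s in S :&: dprefix pi k) gamma s.
  by move=> /(_ _ (leqnn _)); rewrite prefixT // setIT.
elim=> [|k IH] hk.
  by rewrite prefix0 setI0 f0 cards0 big_set0 mul0r oppr0 addr0.
set i : 'I_#|Omega| := Ordinal hk.
have IH' := IH (ltnW hk).
change (dprefix pi k.+1) with (dprefix pi (nat_of_ord i).+1).
rewrite prefixS.
change (dprefix pi k) with (dprefix pi (nat_of_ord i)) in IH'.
move: IH'.
set Sk := S :&: dprefix pi i => IH'.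
case: (boolP (pi i \in S)) => piS; last first.
  have -> : S :&: (pi i |: dprefix pi i) = Sk.
    apply/setP => x; rewrite !inE; case: (eqVneq x (pi i)) => [->|] //=.
    by rewrite (negbTE piS).
  exact: IH'.
have -> : S :&: (pi i |: dprefix pi i) = pi i |: Sk.
  apply/setP => x; rewrite !inE; case: (eqVneq x (pi i)) => [->|] //=; by rewrite piS.
have nSk : pi i \notin Sk by rewrite inE negb_and notin_prefix ?orbT.
rewrite cardsU1 nSk big_setU1 //= natrD mulrDl mul1r.
have sub : Sk \subset dprefix pi i by apply: subsetIr.
have hD : Dterm f Sk (dprefix pi i) (pi i) <= Dmax f.
  apply: Dterm_le.
  have : (#|Sk| < #|Omega|)%N.
    apply: (@leq_trans #|pi i |: Sk|); first by rewrite cardsU1 nSk.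
    exact: max_card.
  by case: #|Omega| => //.
move: hD; rewrite /Dterm (setUidPr sub) (setUC Sk) (setUC (dprefix pi i)).
have := hg i; rewrite prefixS => ->.
move: IH'; set a := f (_ |: dprefix pi i); set b := f (dprefix pi i);
  set c := f (_ |: Sk); set d := f Sk.
move=> IH' hD.
lra.
Qed.
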